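(* Let $p\ge3$ and let $H$ be a graph with vertex set $A\cup B\cup\{v\}$ such that $A$, $B$, $\{v\}$ are pairwise disjoint; $A$ and $B$ are independent sets complete to each other; $|A|\ge p$ and $|B|\ge p$; $v$ has at least two neighbours in $A\cup B$; and $v$ has a neighbour and a non-neighbour in at least one of the sets $A$, $B$. Then $H\xrightarrow{\cap} X_p$ or $H\xrightarrow{\cap} Y_p$. In particular, if $p\ge 3t^2+t+1$ for some $t\in\mathbb{N}$, then $H\xrightarrow{\cap} tS_{t,t,t}$.
   Context: All graphs are finite and simple. For graphs $G_1=(V_1,E_1)$, $G_2=(V_2,E_2)$, $G_1\cap G_2=(V_1\cap V_2, E_1\cap E_2)$. For a graph $G=(V,E)$ and an injective map $\alpha$ on $V$, $G^{\alpha}$ has vertex set $\alpha(V)$ and edge set $\{\{\alpha(v),\alpha(w)\}: \{v,w\}\in E\}$. We write $G\xrightarrow{\cap} H$ if $H$ is (isomorphic to) $G^{\alpha_1}\cap\cdots\cap G^{\alpha_k}$ for some $k\ge1$ and injective maps $\alpha_1,\dots,\alpha_k$ on $V(G)$. For integers $a,b,c\ge1$, $S_{a,b,c}$ is the tree consisting of a vertex of degree $3$ together with three pendant paths having $a$, $b$, $c$ edges respectively; $tS_{t,t,t}$ is the disjoint union of $t$ copies of $S_{t,t,t}$. $X_p$ is the graph obtained from $K_{p,p}$ by adding a new vertex adjacent to exactly two vertices, both in the same part; $Y_p$ is obtained from $K_{p,p}$ by adding a new vertex adjacent to exactly two vertices, one in each part. *)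

(* Defs.v *)
From mathcomp Require Import all_boot.
Set Implicit Arguments. Unset Strict Implicit. Unset Printing Implicit Defensive.

Definition simple_graph (T : finType) (E : rel T) : Prop :=
  symmetric E /\ irreflexive E.

(* G -->cap H : H is isomorphic to G^{a_1} cap ... cap G^{a_k} for some k >= 1
   and injective maps a_i on V(G).  The common codomain of the maps is nat
   (any finitely many finite images can be relabelled into nat).
   The intersection has vertex set the intersection of the images a_i(V) and
   edge {u,w} iff for every i it is the image under a_i of an edge of G. *)
Definition cap_edge (T : finType) (E : rel T) (a : T -> nat) (u w : nat) : Prop :=
  exists x y, a x = u /\ a y = w /\ E x y.

Definition intersects_to (T : finType) (E : rel T) (S : finType) (F : rel S) : Prop :=
  exists (k : nat) (alpha : 'I_k.+1 -> T -> nat),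
    (forall i, injective (alpha i)) /\
    exists phi : S -> nat,
      injective phi /\
      (forall u : nat, (forall i, exists x, alpha i x = u) <-> exists s, phi s = u) /\
      (forall s s' : S, F s s' <-> forall i, cap_edge E (alpha i) (phi s) (phi s')).

(* K_{p,p} on 'I_p + 'I_p, plus a new vertex None. *)
Definition Kpp_adj (p : nat) (x y : 'I_p + 'I_p) : bool :=
  match x, y with
  | inl _, inr _ | inr _, inl _ => true
  | _, _ => false
  end.

Definition X_new (p : nat) (x : 'I_p + 'I_p) : bool :=
  match x with inl i => (val i < 2)%N | inr _ => false end.

Definition Y_new (p : nat) (x : 'I_p + 'I_p) : bool :=
  match x with inl i => val i == 0 | inr j => val j == 0 end.

Definition ext_adj (p : nat) (N : 'I_p + 'I_p -> bool)
    (x y : option ('I_p + 'I_p)) : bool :=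
  match x, y with
  | Some a, Some b => Kpp_adj a b
  | None, Some b => N b
  | Some a, None => N a
  | None, None => false
  end.

Definition Xp_adj (p : nat) : rel (option ('I_p + 'I_p)) := ext_adj (@X_new p).
Definition Yp_adj (p : nat) : rel (option ('I_p + 'I_p)) := ext_adj (@Y_new p).

(* t S_{t,t,t}: vertices (c, None) = centre of copy c, (c, Some (b, i)) =
   vertex at distance i+1 from the centre on branch b (i < t). *)
Definition tS_vert (t : nat) := ('I_t * option ('I_3 * 'I_t))%type.

Definition S_adj1 (t : nat) (x y : option ('I_3 * 'I_t)) : bool :=
  match x, y with
  | None, Some (_, i) => val i == 0
  | Some (b, i), Some (b', j) => (b == b') && (val j == (val i).+1)
  | _, _ => false
  end.

Definition tS_adj (t : nat) : rel (tS_vert t) :=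
  fun x y => (x.1 == y.1) && (S_adj1 x.2 y.2 || S_adj1 y.2 x.2).

(* Main.v *)
Require Import Defs.
From mathcomp Require Import all_boot zify.
Set Implicit Arguments. Unset Strict Implicit. Unset Printing Implicit Defensive.

Definition good (S T : finType) (F : rel S) (E : rel T) (f : S -> T) :=
  injective f /\ forall s s', F s s' -> E (f s) (f s').

Definition rk (S : finType) (s : S) : nat := enum_rank s.
Lemma rk_inj (S : finType) : injective (@rk S).
Proof. by move=> x y /val_inj /enum_rank_inj. Qed.

Definition cS (S : finType) : nat := #|S|.

Definition lab (S T : finType) (j : nat) (f : S -> T) (x : T) : nat :=
  if [pick s | f s == x] is Some s then rk s
  else cS S + j * cS T + rk x.

Lemma rank_lt (S : finType) (s : S) : rk s < cS S.
Proof. exact: ltn_ord. Qed.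

Lemma lab_val (S T : finType) j (f : S -> T) : injective f ->
  forall s, lab j f (f s) = rk s.
Proof.
move=> fi s; rewrite /lab; case: pickP => [s' /eqP /fi -> //|/(_ s)].
by rewrite eqxx.
Qed.

Lemma lab_eq (S T : finType) j (f : S -> T) : injective f ->
  forall x s, lab j f x = rk s -> x = f s.
Proof.
move=> fi x s; rewrite /lab; case: pickP => [s' /eqP <- /rk_inj -> //|_ e].
exfalso; have := rank_lt ( s). lia.
Qed.

Lemma lab_inj (S T : finType) j (f : S -> T) : injective (lab j f).
Proof.
move=> x y; rewrite /lab; case: pickP => [s1 /eqP <-|_]; case: pickP => [s2 /eqP <-|_].
- by move=> /rk_inj ->.
- move=> e; exfalso; have := rank_lt ( s1); lia.
- move=> e; exfalso; have := rank_lt ( s2); lia.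
- by move=> /addnI /rk_inj.
Qed.

Lemma crit (S T : finType) (F : rel S) (E : rel T) :
  (exists f0, good F E f0) ->
  (forall s s', ~~ F s s' -> exists f, good F E f /\ ~~ E (f s) (f s')) ->
  intersects_to E F.
Proof.
move=> [f0 [f0i f0h]] kill.
pose goodb (f : {ffun S -> T}) :=
  injectiveb f && [forall s, [forall s', F s s' ==> E (f s) (f s')]].
have goodP (f : {ffun S -> T}) : goodb f -> good F E f.
  rewrite /goodb; case/andP=> /injectiveP fi /forallP fh; split=> // s s' Fss.
  by have /forallP/(_ s')/implyP := fh s; apply.
have goodbP (f : S -> T) : good F E f -> goodb (finfun f).
  case=> fi fh; apply/andP; split.
    by apply/injectiveP=> x y; rewrite !ffunE => /fi.
  by apply/forallP=> s; apply/forallP=> s'; rewrite !ffunE; apply/implyP; apply: fh.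
pose L := [seq f <- enum {ffun S -> T} | goodb f].
pose F0 := finfun f0.
have F0L : F0 \in L by rewrite mem_filter mem_enum andbT goodbP.
pose k := size L.
have k0 : 0 < k by rewrite /k lt0n size_eq0; apply/eqP => E0; move: F0L; rewrite E0.
pose h (j : nat) : S -> T := fun s => nth F0 L j s.
have hgood j : good F E (h j).
  case: (ltnP j k) => jk.
    have : nth F0 L j \in L by apply: mem_nth.
    by rewrite mem_filter => /andP[/goodP]; rewrite /h.
  by rewrite /h nth_default //; apply: goodP; move: F0L; rewrite mem_filter => /andP[].
have hinj j : injective (h j) by case: (hgood j).
pose alpha (j : 'I_k.+1) := lab j (h j).
exists k, alpha; split; first by move=> i; apply: lab_inj.
exists (@rk S); split.
  exact: rk_inj.
split.
  move=> u; split.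
    move=> H.
    have k1 : 1 < k.+1 by [].
    have [x0 e0] := H ord0; have [x1 e1] := H (Ordinal k1).
    move: e0 e1; rewrite /alpha /lab /=.
    case: pickP => [s _ <- _|_ e0]; first by exists s.
    case: pickP => [s _ e1|_ e1].
      exfalso; have := rank_lt s; lia.
    exfalso; have := rank_lt x0; lia.
  by move=> [s <-] i; exists (h i s); apply: lab_val.
move=> s s'; split.
  move=> Fss i; exists (h i s), (h i s'); split; first exact: lab_val.
  split; first exact: lab_val.
  by case: (hgood i) => _; apply.
move=> H; apply/negPn/negP => nF.
have [f [gf nE]] := kill _ _ nF.
have fL : finfun f \in L by rewrite mem_filter mem_enum andbT goodbP.
have jk : index (finfun f) L < k.+1 by apply: (leq_trans _ (leqnSn _)); rewrite index_mem.
have [x [y [ex [ey Exy]]]] := H (Ordinal jk).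
move: ex ey; rewrite /alpha /= => ex ey.
have ex' := lab_eq (hinj _) ex; have ey' := lab_eq (hinj _) ey.
by move: Exy; rewrite ex' ey' /h nth_index // !ffunE (negbTE nE).
Qed.

Record setup (T : finType) (E : rel T) (v : T) (P Q : {set T}) : Prop := Setup {
  s_sym : symmetric E; s_irr : irreflexive E;
  s_vP : v \notin P; s_vQ : v \notin Q; s_disj : [disjoint P & Q];
  s_iP : forall x y, x \in P -> y \in P -> ~~ E x y;
  s_iQ : forall x y, x \in Q -> y \in Q -> ~~ E x y;
  s_c : forall x y, x \in P -> y \in Q -> E x y }.

Lemma setup_swap T E v P Q : @setup T E v P Q -> setup E v Q P.
Proof.
case=> sy ir vP vQ d iP iQ c; constructor => //; first by rewrite disjoint_sym.
by move=> x y xQ yP; rewrite sy; apply: c.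
Qed.

Definition side (T : finType) (P Q : {set T}) (b : bool) := if b then P else Q.

Lemma sideE T E v P Q x y b c : @setup T E v P Q ->
  x \in side P Q b -> y \in side P Q c -> b != c -> E x y.
Proof.
case=> sy _ _ _ _ _ _ cc; case: b; case: c => //= xs ys _; first exact: cc.
by rewrite sy; apply: cc.
Qed.

Lemma sideN T E v P Q x y b : @setup T E v P Q ->
  x \in side P Q b -> y \in side P Q b -> ~~ E x y.
Proof. by case=> _ _ _ _ _ iP iQ _; case: b => /=; [apply: iP|apply: iQ]. Qed.

Lemma side_v T E v P Q b : @setup T E v P Q -> v \notin side P Q b.
Proof. by case=> _ _ vP vQ *; case: b. Qed.

Lemma extend_aux (S T : finType) (D : S -> {set T}) n : forall (g0 : S -> T) (X : {set S}),
  #|X| = n ->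
  {in ~: X &, injective g0} -> (forall s, s \in X -> #|S| <= #|D s|) ->
  exists g : S -> T, (forall s, s \notin X -> g s = g0 s) /\ injective g /\
    (forall s, s \in X -> g s \in D s).
Proof.
elim: n => [|n IH] g0 X cX gi roomX.
  move/eqP: cX; rewrite cards_eq0 => /eqP X0; subst X.
  exists g0; split=> //; split; last by move=> s; rewrite inE.
  by move=> x y; apply: gi; rewrite !inE.
have [s sX] : exists s, s \in X by apply/set0Pn; rewrite -card_gt0 cX.
pose Y := g0 @: (~: X).
have cY : #|Y| < #|D s|.
  apply: (leq_ltn_trans (leq_imset_card _ _)); apply: (leq_trans _ (roomX s sX)).
  rewrite -(cardsC X); have : 0 < #|X| by rewrite cX. lia.
have [y yD] : exists y, y \in D s :\: Y.
  apply/set0Pn; rewrite -card_gt0 cardsD.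
  have := subset_leq_card (subsetIr (D s) Y); lia.
move: yD; rewrite inE => /andP[yY yDs].
pose g1 := fun x => if x == s then y else g0 x.
have cX' : #|X :\ s| = n by move: cX; rewrite (cardsD1 s X) sX; case.
have gi' : {in ~: (X :\ s) &, injective g1}.
  move=> a b; rewrite !inE /g1 !negb_and !negbK.
  case: (eqVneq a s) => [->|as_]; case: (eqVneq b s) => [->|bs] //= aX bX.
  - move=> e; move/negP: yY; rewrite e; case.
    by apply/imsetP; exists b; rewrite ?inE.
  - move=> e; move/negP: yY; rewrite -e; case.
    by apply/imsetP; exists a; rewrite ?inE.
  - by apply: gi; rewrite inE.
have [g [g1e [ginj gD]]] := IH g1 (X :\ s) cX' gi' (fun x xX => roomX x (subsetP (subD1set X s) x xX)).
exists g; split; last split=> //.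
  move=> x xX; rewrite g1e /g1; last by rewrite inE negb_and xX orbT.
  by case: eqP => // xs; move: xX; rewrite xs sX.
move=> x xX; case: (eqVneq x s) => [->|xs].
  by rewrite g1e /g1 ?eqxx // !inE eqxx.
by apply: gD; rewrite !inE xs.
Qed.

Lemma extend (S T : finType) (D : S -> {set T}) (g0 : S -> T) (X : {set S}) :
  {in ~: X &, injective g0} -> (forall s, s \in X -> #|S| <= #|D s|) ->
  exists g : S -> T, (forall s, s \notin X -> g s = g0 s) /\ injective g /\
    (forall s, s \in X -> g s \in D s).
Proof. exact: (@extend_aux S T D #|X| g0 X erefl). Qed.

Definition mk (T : finType) (p : nat) (v : T) (LL LR : 'I_p -> T)
  (o : option ('I_p + 'I_p)) : T :=
  match o with None => v | Some (inl i) => LL i | Some (inr j) => LR j end.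

Lemma XYgood (T : finType) E v P Q p (N : 'I_p + 'I_p -> bool) (LL LR : 'I_p -> T) :
  @setup T E v P Q -> injective LL -> injective LR ->
  (forall i, LL i \in P) -> (forall j, LR j \in Q) ->
  (forall x, N x -> E v (mk v LL LR (Some x))) ->
  good (ext_adj N) E (mk v LL LR).
Proof.
move=> su iL iR LP RQ HN; have [sy ir vP vQ d iP iQ c] := su; split.
  move=> x y; case: x => [[i|j]|]; case: y => [[i'|j']|] //=.
  - by move/iL ->.
  - by move=> e; move: (disjointFr d (LP i)); rewrite e RQ.
  - by move=> e; move: vP; rewrite -e LP.
  - by move=> e; move: (disjointFr d (LP i')); rewrite -e RQ.
  - by move/iR ->.
  - by move=> e; move: vQ; rewrite -e RQ.
  - by move=> e; move: vP; rewrite e LP.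
  - by move=> e; move: vQ; rewrite e RQ.
move=> x y; case: x => [[i|j]|]; case: y => [[i'|j']|] //=.
- by move=> _; apply: c.
- by move=> Hn; rewrite sy; apply: (HN (inl i)).
- by move=> _; rewrite sy; apply: c.
- by move=> Hn; rewrite sy; apply: (HN (inr j)).
- by move=> Hn; apply: (HN (inl i')).
- by move=> Hn; apply: (HN (inr j')).
Qed.

Lemma mkL (T : finType) p (P : {set T}) (g0 : 'I_p -> T) (X : {set 'I_p}) : p <= #|P| ->
  {in ~: X &, injective g0} -> (forall k, k \notin X -> g0 k \in P) ->
  exists L : 'I_p -> T, injective L /\ (forall k, L k \in P) /\
    (forall k, k \notin X -> L k = g0 k).
Proof.
move=> pP gi gP; have [g [ge [gi' gD]]] := @extend _ _ (fun _ => P) g0 X gi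
  (fun _ _ => (leq_trans (eq_leq (card_ord p)) pP)).
exists g; split; first done; split; last done.
move=> k; case: (boolP (k \in X)) => kX; first exact: gD.
by rewrite ge //; apply: gP.
Qed.

Lemma L3 (T : finType) p (P : {set T}) (i0 i1 i2 : 'I_p) (a b c : T) : p <= #|P| ->
  i0 != i1 -> i0 != i2 -> i1 != i2 -> a != b -> a != c -> b != c ->
  a \in P -> b \in P -> c \in P ->
  exists L : 'I_p -> T, [/\ injective L, (forall k, L k \in P), L i0 = a, L i1 = b & L i2 = c].
Proof.
move=> pP h01 h02 h12 hab hac hbc aP bP cP.
have h10 : i1 != i0 by rewrite eq_sym.
have h20 : i2 != i0 by rewrite eq_sym.
have h21 : i2 != i1 by rewrite eq_sym.
have hba : b != a by rewrite eq_sym.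
have hca : c != a by rewrite eq_sym.
have hcb : c != b by rewrite eq_sym.
pose g0 k := if k == i0 then a else if k == i1 then b else c.
pose X := [set k | [&& k != i0, k != i1 & k != i2]].
have gi : {in ~: X &, injective g0}.
  move=> k k'; rewrite !inE !negb_and !negbK.
  by move=> /or3P[]/eqP-> /or3P[]/eqP->; rewrite /g0 ?eqxx ?(negbTE h10) ?(negbTE h20)
    ?(negbTE h21) ?(negbTE h01) ?(negbTE h02) ?(negbTE h12) // => /eqP;
    rewrite ?(negbTE hab) ?(negbTE hac) ?(negbTE hbc) ?(negbTE hba) ?(negbTE hca) ?(negbTE hcb).
have gP : forall k, k \notin X -> g0 k \in P.
  move=> k; rewrite !inE !negb_and !negbK => /or3P[]/eqP->;
  by rewrite /g0 ?eqxx ?(negbTE h10) ?(negbTE h20) ?(negbTE h21).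
have [L [Li [LP Le]]] := @mkL T p P g0 X pP gi gP.
exists L; split=> //; rewrite Le /g0 ?eqxx ?(negbTE h10) ?(negbTE h20) ?(negbTE h21) //;
  by rewrite !inE ?eqxx ?andbF.
Qed.

Lemma L2 (T : finType) p (P : {set T}) (i0 i1 : 'I_p) (a b : T) : p <= #|P| ->
  i0 != i1 -> a != b -> a \in P -> b \in P ->
  exists L : 'I_p -> T, [/\ injective L, (forall k, L k \in P), L i0 = a & L i1 = b].
Proof.
move=> pP h01 hab aP bP.
have h10 : i1 != i0 by rewrite eq_sym.
have hba : b != a by rewrite eq_sym.
pose g0 k := if k == i0 then a else b.
pose X := [set k | (k != i0) && (k != i1)].
have gi : {in ~: X &, injective g0}.
  move=> k k'; rewrite !inE !negb_and !negbK.
  by move=> /orP[]/eqP-> /orP[]/eqP->; rewrite /g0 ?eqxx ?(negbTE h10) // => /eqP;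
    rewrite ?(negbTE hab) ?(negbTE hba).
have gP : forall k, k \notin X -> g0 k \in P.
  by move=> k; rewrite !inE !negb_and !negbK => /orP[]/eqP->; rewrite /g0 ?eqxx ?(negbTE h10).
have [L [Li [LP Le]]] := @mkL T p P g0 X pP gi gP.
exists L; split=> //; rewrite Le /g0 ?eqxx ?(negbTE h10) //; by rewrite !inE ?eqxx ?andbF.
Qed.

Lemma L1 (T : finType) p (P : {set T}) (i0 : 'I_p) (a : T) : p <= #|P| -> a \in P ->
  exists L : 'I_p -> T, [/\ injective L, (forall k, L k \in P) & L i0 = a].
Proof.
move=> pP aP.
pose g0 := fun _ : 'I_p => a.
pose X := [set k | k != i0].
have gi : {in ~: X &, injective g0}.
  by move=> k k'; rewrite !inE !negbK => /eqP-> /eqP->.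
have gP : forall k, k \notin X -> g0 k \in P by [].
have [L [Li [LP Le]]] := @mkL T p P g0 X pP gi gP.
by exists L; split=> //; rewrite Le // !inE negbK.
Qed.

Lemma Ylemma (T : finType) E v P Q p a b z : @setup T E v P Q -> 0 < p ->
  p <= #|P| -> p <= #|Q| -> a \in P -> E v a -> b \in Q -> E v b ->
  z \in P -> ~~ E v z -> intersects_to E (@Yp_adj p).
Proof.
move=> su p0 pP pQ aP va bQ vb zP vz.
have su' := setup_swap su.
have [sy ir vP vQ d iP iQ c] := su.
pose o0 : 'I_p := Ordinal p0.
have az : a != z by apply: contraNneq vz => <-.
have NY (LL LR : 'I_p -> T) : LL o0 = a -> LR o0 = b ->
    forall x, Y_new x -> E v (mk v LL LR (Some x)).
  move=> e1 e2 [i|j] /= /eqP i0.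
  - have -> : i = o0 by apply: val_inj. by rewrite e1.
  - have -> : j = o0 by apply: val_inj. by rewrite e2.
have NY' (LL LR : 'I_p -> T) : LL o0 = b -> LR o0 = a ->
    forall x, Y_new x -> E v (mk v LL LR (Some x)).
  move=> e1 e2 [i|j] /= /eqP i0.
  - have -> : i = o0 by apply: val_inj. by rewrite e1.
  - have -> : j = o0 by apply: val_inj. by rewrite e2.
have [LA [LAi LAP LA0]] := L1 o0 pP aP.
have [LB [LBi LBQ LB0]] := L1 o0 pQ bQ.
have g0 : good (@Yp_adj p) E (mk v LA LB) by apply: XYgood su LAi LBi LAP LBQ (NY _ _ LA0 LB0).
apply: crit; first by exists (mk v LA LB).
have killL (i : 'I_p) : i != o0 -> exists f, good (@Yp_adj p) E f /\ f None = v /\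
    f (Some (inl i)) = z.
  move=> io; have oi : o0 != i by rewrite eq_sym.
  have [LA' [LA'i LA'P LA'0 LA'1]] := L2 pP oi az aP zP.
  exists (mk v LA' LB); split; last by [].
  by apply: XYgood su LA'i LBi LA'P LBQ (NY _ _ LA'0 LB0).
have killR (j : 'I_p) : j != o0 -> exists f, good (@Yp_adj p) E f /\ f None = v /\
    f (Some (inr j)) = z.
  move=> jo; have oj : o0 != j by rewrite eq_sym.
  have [LB' [LB'i LB'P LB'0 LB'1]] := L2 pP oj az aP zP.
  have [LA' [LA'i LA'Q LA'0]] := L1 o0 pQ bQ.
  exists (mk v LA' LB'); split; last by [].
  by apply: XYgood su' LA'i LB'i LA'Q LB'P (NY' _ _ LA'0 LB'0).
have neq0 (i : 'I_p) : val i != 0 -> i != o0.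
  by move=> h; apply/eqP => e; rewrite e in h.
move=> x y; case: x => [[i|j]|]; case: y => [[i'|j']|] => //=; move=> nE.
- by exists (mk v LA LB); split=> //=; apply: iP.
- have [f [gf [fN fi]]] := killL i (neq0 _ nE).
  by exists f; split=> //; rewrite fN fi sy.
- by exists (mk v LA LB); split=> //=; apply: iQ.
- have [f [gf [fN fi]]] := killR j (neq0 _ nE).
  by exists f; split=> //; rewrite fN fi sy.
- have [f [gf [fN fi]]] := killL i' (neq0 _ nE).
  by exists f; split=> //; rewrite fN fi.
- have [f [gf [fN fi]]] := killR j' (neq0 _ nE).
  by exists f; split=> //; rewrite fN fi.
- by exists (mk v LA LB); split=> //=; rewrite ir.
Qed.

Lemma Xlemma (T : finType) E v P Q p a1 a2 z : @setup T E v P Q -> 2 < p ->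
  p <= #|P| -> p <= #|Q| -> a1 \in P -> a2 \in P -> a1 != a2 -> E v a1 -> E v a2 ->
  z \in P -> ~~ E v z -> (forall y, y \in Q -> ~~ E v y) -> intersects_to E (@Xp_adj p).
Proof.
move=> su p2 pP pQ a1P a2P a12 va1 va2 zP vz vQn.
have [sy ir vP vQ d iP iQ c] := su.
have p0 : 0 < p by apply: leq_trans p2.
have p1 : 1 < p by apply: leq_trans p2.
pose o0 : 'I_p := Ordinal p0.
pose o1 : 'I_p := Ordinal p1.
have [b bQ] : exists b, b \in Q by apply/set0Pn; rewrite -card_gt0; apply: leq_trans pQ.
have a1z : a1 != z by apply: contraNneq vz => <-.
have a2z : a2 != z by apply: contraNneq vz => <-.
have NX (LL LR : 'I_p -> T) : LL o0 = a1 -> LL o1 = a2 ->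
    forall x, X_new x -> E v (mk v LL LR (Some x)).
  move=> e1 e2 [i|j] //= i2.
  case: (eqVneq (val i) 0) => [i0|i0].
    have -> : i = o0 by apply: val_inj. by rewrite e1.
  have -> : i = o1 by apply: val_inj; move: i0 i2 => /=; case: (nat_of_ord i) => [|[|k]].
  by rewrite e2.
have o01 : o0 != o1 by [].
have [LA [LAi LAP LA0 LA1]] := L2 pP o01 a12 a1P a2P.
have [LB [LBi LBQ LB0]] := L1 o0 pQ bQ.
have g0 : good (@Xp_adj p) E (mk v LA LB) by apply: XYgood su LAi LBi LAP LBQ (NX _ _ LA0 LA1).
apply: crit; first by exists (mk v LA LB).
have killL (i : 'I_p) : ~~ (val i < 2) -> exists f, good (@Xp_adj p) E f /\ f None = v /\
    f (Some (inl i)) = z.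
  move=> i2; have o0i : o0 != i by apply/eqP => e; rewrite -e in i2.
  have o1i : o1 != i by apply/eqP => e; rewrite -e in i2.
  have [LA' [LA'i LA'P LA'0 LA'1 LA'2]] := L3 pP o01 o0i o1i a12 a1z a2z a1P a2P zP.
  exists (mk v LA' LB); split; last by [].
  by apply: XYgood su LA'i LBi LA'P LBQ (NX _ _ LA'0 LA'1).
move=> x y; case: x => [[i|j]|]; case: y => [[i'|j']|] => //=; move=> nE.
- by exists (mk v LA LB); split=> //=; apply: iP.
- have [f [gf [fN fi]]] := killL i nE.
  by exists f; split=> //; rewrite fN fi sy.
- by exists (mk v LA LB); split=> //=; apply: iQ.
- by exists (mk v LA LB); split=> //=; rewrite sy; apply: vQn.
- have [f [gf [fN fi]]] := killL i' nE.
  by exists f; split=> //; rewrite fN fi.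
- by exists (mk v LA LB); split=> //=; apply: vQn.
- by exists (mk v LA LB); split=> //=; rewrite ir.
Qed.

Definition par t (s : tS_vert t) : bool := if s.2 is Some (_, i) then ~~ odd i else false.
Definition outer t (c : 'I_t) (b : 'I_3) (i : nat) (s : tS_vert t) : bool :=
  (s.1 == c) && (if s.2 is Some (b', j) then (b' == b) && (i < j) else false).

Ltac bdestr := repeat match goal with
 | H : is_true (_ && _) |- _ => let H1 := fresh "H" in let H2 := fresh "H" in case/andP: H => H1 H2
 | H : is_true (_ || _) |- _ => case/orP: H => H
 | H : is_true (~~ (_ && _)) |- _ => rewrite negb_and in H
 | H : is_true (~~ (_ || _)) |- _ => rewrite negb_or in H
 | H : is_true (~~ ~~ _) |- _ => rewrite negbK in H
 | H : is_true (@eq_op _ _ _) |- _ => move/eqP: H => H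
 end.

Lemma tS_sym t : symmetric (@tS_adj t).
Proof. by move=> x y; rewrite /tS_adj eq_sym orbC. Qed.

Lemma tS_irr t (x : tS_vert t) : tS_adj x x = false.
Proof.
case: x => c [[b i]|]; rewrite /tS_adj /= ?eqxx //=.
by rewrite ?orbb (ltn_eqF (ltnSn _)).
Qed.

Lemma tS_edge t (s s' : tS_vert t) : tS_adj s s' -> s.1 = s'.1 /\ par s' = ~~ par s.
Proof.
case: s => c [[b i]|]; case: s' => c' [[b' i']|]; rewrite /tS_adj /par /= => H; bdestr;
  subst => //; split => //; rewrite ?H1 ?H2 ?H3 ?H4 ?H0 ?H /= ?negbK //.
Qed.

Lemma neq_lt (a b : nat) : (a < b) != (a < b.+1) -> a = b.
Proof. case: (ltngtP a b) => [h|h|h] //=.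
- by rewrite ltnS ltnW.
- by rewrite ltnS leqNgt h.
Qed.

Lemma tS_outer t (c : 'I_t) (b : 'I_3) (ii : 'I_t) (s s' : tS_vert t) :
  tS_adj s s' -> outer c b ii s != outer c b ii s' ->
  s = (c, Some (b, ii)) \/ s' = (c, Some (b, ii)).
Proof.
case: s => cs [[bs i]|]; case: s' => cs' [[bs' i']|]; rewrite /tS_adj /outer /= => H; bdestr;
  subst => //=.
all: case: (eqVneq cs' c) => [->|?]; rewrite ?eqxx ?andbF ?andFb //=.
all: case: (eqVneq _ b) => [->|?]; rewrite ?eqxx ?andbF ?andFb //=.
all: move=> H; match goal with Hq : nat_of_ord _ = _ |- _ => rewrite Hq in H end.
- by left; rewrite (val_inj (neq_lt H)).
- by rewrite eq_sym in H; right; rewrite (val_inj (neq_lt H)).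
- by rewrite ltn0 in H.
- by rewrite ltn0 in H.
Qed.

Lemma nbr_uniq t (c : 'I_t) (b : 'I_3) (ii : 'I_t) (y y' : tS_vert t) :
  tS_adj (c, Some (b, ii)) y -> tS_adj (c, Some (b, ii)) y' ->
  outer c b ii y = outer c b ii y' -> y = y'.
Proof.
case: y => cs [[bs i]|]; case: y' => cs' [[bs' i']|]; rewrite /tS_adj /outer /= => H H'; bdestr;
  subst => //=; rewrite ?eqxx /=.
all: move=> Hb; first [exfalso; lia | by have -> : i = i' by apply: ord_inj; lia].
Qed.

Lemma side_room (T : finType) (P Q : {set T}) n b : n <= #|P| -> n <= #|Q| -> n <= #|side P Q b|.
Proof. by case: b. Qed.

Lemma colmap (S T : finType) (F : rel S) E v P Q (col : S -> bool) :
  @setup T E v P Q -> #|S| <= #|P| -> #|S| <= #|Q| ->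
  (forall s s', F s s' -> col s != col s') ->
  exists f, good F E f /\ forall s, f s \in side P Q (col s).
Proof.
move=> su SP SQ cF.
have gi : {in ~: setT &, injective (fun _ : S => v)} by move=> x y; rewrite !inE.
have [f [_ [fi fD]]] := @extend S T (fun s => side P Q (col s)) (fun _ => v) setT
  gi (fun s _ => side_room _ SP SQ).
exists f; split; last by move=> s; apply: fD; rewrite inE.
split=> // s s' Fss; apply: (sideE su (fD s _) (fD s' _) (cF _ _ Fss)); by rewrite inE.
Qed.

Lemma vmap (S T : finType) (F : rel S) E v P Q (col : S -> bool) (u w : S) (g0 : S -> T) :
  @setup T E v P Q -> symmetric F -> #|S| <= #|P| -> #|S| <= #|Q| ->
  {in u |: (w |: [set y | F u y]) &, injective g0} ->
  g0 u = v ->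
  (forall y, F u y -> E v (g0 y) /\ g0 y \in side P Q (col y)) ->
  g0 w \in side P Q (col w) ->
  (forall s s', F s s' -> s != u -> s' != u -> col s != col s') ->
  exists f, good F E f /\ f u = v /\ f w = g0 w.
Proof.
move=> su Fsy SP SQ gi gu gN gw cF.
pose Pre := u |: (w |: [set y | F u y]).
have gi' : {in ~: (~: Pre) &, injective g0} by rewrite setCK.
have [f [fe [fi fD]]] := @extend S T (fun s => side P Q (col s)) g0 (~: Pre)
  gi' (fun s _ => side_room _ SP SQ).
have fPre s : s \in Pre -> f s = g0 s by move=> sP; apply: fe; rewrite inE negbK.
have fu : f u = v by rewrite fPre ?gu // !inE eqxx.
have fw : f w = g0 w by rewrite fPre // !inE eqxx orbT.
have fside s : s != u -> f s \in side P Q (col s).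
  move=> su'; case: (boolP (s \in Pre)) => sP; last by apply: fD; rewrite inE.
  rewrite fPre //; move: sP; rewrite !inE (negbTE su') /=.
  by case/orP => [/eqP ->//|/gN []].
exists f; split; last by [].
split=> // s s' Fss.
case: (eqVneq s u) => [esu|nsu].
  subst s; rewrite fu fPre; first by case: (gN _ Fss).
  by rewrite !inE Fss !orbT.
case: (eqVneq s' u) => [esu|nsu'].
  subst s'; rewrite fu (s_sym su) fPre; first by case: (gN s); rewrite // Fsy.
  by rewrite !inE Fsy Fss !orbT.
exact: (sideE su (fside _ nsu) (fside _ nsu') (cF _ _ Fss nsu nsu')).
Qed.

Lemma vcase t (T : finType) E v P Q (sg sg2 : bool) zp zm z2 (c : 'I_t) (b : 'I_3) (ii : 'I_t)
  (w : tS_vert t) :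
  @setup T E v P Q -> #|{: 'I_t * option ('I_3 * 'I_t)}| <= #|P| -> #|{: 'I_t * option ('I_3 * 'I_t)}| <= #|Q| ->
  zp \in side P Q sg -> zm \in side P Q sg -> E v zp -> ~~ E v zm ->
  z2 \in side P Q sg2 -> E v z2 -> z2 != zp ->
  w.1 = c -> par w != par (c, Some (b, ii)) -> ~~ tS_adj (c, Some (b, ii)) w ->
  exists f, good (@tS_adj t) E f /\ ~~ E (f (c, Some (b, ii))) (f w).
Proof.
move=> su SP SQ zpS zmS vzp vzm z2S vz2 z2p w1 pw nadj.
set u : tS_vert t := (c, Some (b, ii)) in pw nadj *.
pose ow := outer c b ii w.
pose col (s : tS_vert t) := par s (+) (if s.1 == c then
  (if outer c b ii s == ow then par w (+) sg else par w (+) sg2) else false).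
pose g0 (s : tS_vert t) := if s == u then v else if s == w then zm else
  if outer c b ii s == ow then zp else z2.
have wu : w != u by apply: contraNneq pw => ->.
have parw : par w = ~~ par u by move: pw; case: (par w); case: (par u).
have nbr y : tS_adj u y -> [/\ y != u, y != w, y.1 = c & par y = par w].
  move=> Fy; have [e1 e2] := tS_edge Fy; split.
  - by apply: contraTneq Fy => ->; rewrite tS_irr.
  - by apply: contraTneq Fy => ->.
  - by rewrite -e1.
  - by rewrite e2 parw.
have g0u : g0 u = v by rewrite /g0 eqxx.
have g0w : g0 w = zm by rewrite /g0 (negbTE wu) eqxx.
have g0o s : s != u -> s != w -> g0 s = if outer c b ii s == ow then zp else z2.
  by move=> su' sw; rewrite /g0 (negbTE su') (negbTE sw).
have vnot x b' : x \in side P Q b' -> x != v.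
  by move=> xS; apply: contraTneq xS => ->; apply: side_v su.
have gi : {in u |: (w |: [set y | tS_adj u y]) &, injective g0}.
  move=> x y; rewrite !inE => Hx Hy.
  have gs s : s != u -> g0 s != v.
    move=> su'; case: (eqVneq s w) => [->|sw]; first by rewrite g0w (vnot _ _ zmS).
    by rewrite g0o //; case: (outer c b ii s == ow) => /=; [apply: (vnot _ _ zpS)|apply: (vnot _ _ z2S)].
  have gE s : s != u -> s != w -> E v (g0 s).
    by move=> su' sw; rewrite g0o //; case: (outer c b ii s == ow).
  case: (eqVneq x u) => [->|xu]; case: (eqVneq y u) => [->|yu] //.
  - by rewrite g0u => e; move: (gs _ yu); rewrite -e eqxx.
  - by rewrite g0u => e; move: (gs _ xu); rewrite e eqxx.
  move: Hx Hy; rewrite (negbTE xu) (negbTE yu) /=.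
  case: (eqVneq x w) => [->|xw]; case: (eqVneq y w) => [->|yw] //= Hx Hy.
  - by rewrite g0w => e; move: (gE _ yu yw); rewrite -e (negbTE vzm).
  - by rewrite g0w => e; move: (gE _ xu xw); rewrite e (negbTE vzm).
  rewrite (g0o _ xu xw) (g0o _ yu yw).
  case hx: (outer c b ii x == ow); case hy: (outer c b ii y == ow).
  - by move=> _; apply: nbr_uniq Hx Hy _; rewrite (eqP hx) (eqP hy).
  - by move=> e; move: z2p; rewrite e eqxx.
  - by move=> e; move: z2p; rewrite e eqxx.
  - move=> _; apply: nbr_uniq Hx Hy _.
    by move: hx hy; case: (outer c b ii x); case: (outer c b ii y); case: (ow).
have gN y : tS_adj u y -> E v (g0 y) /\ g0 y \in side P Q (col y).
  move=> /nbr [yu yw y1 py]; rewrite (g0o _ yu yw) /col y1 eqxx py.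
  by case: (outer c b ii y == ow); rewrite addbA addbb.
have gw : g0 w \in side P Q (col w).
  by rewrite g0w /col w1 eqxx /ow eqxx addbA addbb.
have cF s s' : tS_adj s s' -> s != u -> s' != u -> col s != col s'.
  move=> Fss su' s'u; have [e1 e2] := tS_edge Fss.
  rewrite /col -e1 e2; case: (s.1 == c).
    have -> : outer c b ii s = outer c b ii s'.
      apply/eqP; apply: contraT => ne.
      by case: (tS_outer Fss ne) => e; [move: su'|move: s'u]; rewrite e eqxx.
    by rewrite addNb; case: (_ (+) _).
  by case: (par s).
have [f [gf [fu fw]]] := vmap su (@tS_sym t) SP SQ gi g0u gN gw cF.
by exists f; split=> //; rewrite fu fw g0w.
Qed.

Lemma tSlemma t (T : finType) E v P Q (sg sg2 : bool) zp zm z2 :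
  @setup T E v P Q -> #|{: 'I_t * option ('I_3 * 'I_t)}| <= #|P| ->
  #|{: 'I_t * option ('I_3 * 'I_t)}| <= #|Q| ->
  zp \in side P Q sg -> zm \in side P Q sg -> E v zp -> ~~ E v zm ->
  z2 \in side P Q sg2 -> E v z2 -> z2 != zp ->
  intersects_to E (@tS_adj t).
Proof.
move=> su SP SQ zpS zmS vzp vzm z2S vz2 z2p.
have cF0 : forall s s', tS_adj s s' -> @par t s != par s'.
  by move=> s s' /tS_edge [_ ->]; case: (par s).
apply: crit.
  have [f0 [g0 _]] := colmap su SP SQ cF0; by exists f0.
move=> s s' nE.
case: (boolP ((s.1 != s'.1) || (par s == par s'))) => H.
  pose col (x : tS_vert t) := par x (+) ((x.1 == s'.1) && (par s != par s')).
  have cF : forall x y, tS_adj x y -> col x != col y.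
    move=> x y Fxy; have [e1 e2] := tS_edge Fxy.
    by rewrite /col -e1 e2 addNb; case: (_ (+) _).
  have [f [gf fs]] := colmap su SP SQ cF.
  exists f; split=> //; apply: (sideN su (fs s)).
  have -> : col s = col s'; last exact: fs.
  rewrite /col eqxx; case/orP: H => [ne|peq].
    by rewrite (negbTE ne) /=; case: (par s); case: (par s').
  by rewrite peq /= ?andbF; move: peq; case: (par s); case: (par s').
move: H; rewrite negb_or negbK => /andP[/eqP e1 pne].
case es: s => [c [[b ii]|]].
  have w1 : s'.1 = c by rewrite -e1 es.
  have pw : par s' != par (c, Some (b, ii)) by rewrite -es eq_sym.
  have nadj : ~~ tS_adj (c, Some (b, ii)) s' by rewrite -es.
  exact: (vcase su SP SQ zpS zmS vzp vzm z2S vz2 z2p w1 pw nadj).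
case es': s' => [c' [[b' ii']|]]; last by move: pne; rewrite es es'.
have w1 : s.1 = c' by rewrite e1 es'.
have pw : par s != par (c', Some (b', ii')) by rewrite -es'.
have nadj : ~~ tS_adj (c', Some (b', ii')) s by rewrite -es' tS_sym.
have [f [gf nE']] := vcase su SP SQ zpS zmS vzp vzm z2S vz2 z2p w1 pw nadj.
by exists f; split=> //; rewrite (s_sym su) -es.
Qed.

Lemma cardtS (t : nat) : #|{: 'I_t * option ('I_3 * 'I_t)}| = t * (3 * t).+1.
Proof. rewrite card_prod card_option card_prod !card_ord. reflexivity. Qed.

Lemma tbound (t p : nat) : 3 * t ^ 2 + t + 1 <= p -> t * (3 * t).+1 <= p.
Proof. move=> h; apply: leq_trans h; rewrite expnS expn1 mulnS; lia. Qed.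

Theorem mainTheorem7 (p : nat) (T : finType) (E : rel T)
    (A B : {set T}) (v : T) :
  (3 <= p)%N ->
  simple_graph E ->
  [set: T] = A :|: B :|: [set v] ->
  [disjoint A & B] -> v \notin A -> v \notin B ->
  (forall x y, x \in A -> y \in A -> ~~ E x y) ->
  (forall x y, x \in B -> y \in B -> ~~ E x y) ->
  (forall x y, x \in A -> y \in B -> E x y) ->
  (p <= #|A|)%N -> (p <= #|B|)%N ->
  (2 <= #|[set x in A :|: B | E v x]|)%N ->
  ((exists2 x, x \in A & E v x) /\ (exists2 y, y \in A & ~~ E v y) \/
   (exists2 x, x \in B & E v x) /\ (exists2 y, y \in B & ~~ E v y)) ->
  (intersects_to E (@Xp_adj p) \/ intersects_to E (@Yp_adj p)) /\
  (forall t : nat, (3 * t ^ 2 + t + 1 <= p)%N -> intersects_to E (@tS_adj t)).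
Proof.
move=> p3 [sy ir] _ d vA vB iA iB cAB pA pB N2 hyp.
have su : setup E v A B by constructor.
have su' := setup_swap su.
have p0 : 0 < p by apply: leq_trans p3.
have p2 : 2 < p by [].
have [x1 [x2 [x1N x2N x12]]] : exists x1 x2, [/\ x1 \in [set x in A :|: B | E v x],
    x2 \in [set x in A :|: B | E v x] & x1 != x2] by apply/card_gt1P.
move: x1N x2N; rewrite !inE => /andP[x1AB vx1] /andP[x2AB vx2].
split.
  case: (boolP [exists a in A, E v a]) => hA; case: (boolP [exists b in B, E v b]) => hB.
  - move/existsP: hA => [a /andP[aA va]]; move/existsP: hB => [b /andP[bB vb]].
    right; case: hyp => [[_ [z zA vz]]|[_ [z zB vz]]].
      exact: (Ylemma su p0 pA pB aA va bB vb zA vz).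
    exact: (Ylemma su' p0 pB pA bB vb aA va zB vz).
  - have nB : forall y, y \in B -> ~~ E v y.
      by move=> y yB; apply/negP => vy; move/negP: hB; apply; apply/existsP; exists y; rewrite yB.
    have inA x : (x \in A) || (x \in B) -> E v x -> x \in A.
      by move=> /orP[//|xB] vx; move: (nB _ xB); rewrite vx.
    have [z zA vz] : exists2 z, z \in A & ~~ E v z.
      case: hyp => [[_ //]|[[y yB vy] _]]; by move: (nB _ yB); rewrite vy.
    left; exact: (Xlemma su p2 pA pB (inA _ x1AB vx1) (inA _ x2AB vx2) x12 vx1 vx2 zA vz nB).
  - have nA : forall y, y \in A -> ~~ E v y.
      by move=> y yA; apply/negP => vy; move/negP: hA; apply; apply/existsP; exists y; rewrite yA.
    have inB x : (x \in A) || (x \in B) -> E v x -> x \in B.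
      by move=> /orP[xA|//] vx; move: (nA _ xA); rewrite vx.
    have [z zB vz] : exists2 z, z \in B & ~~ E v z.
      case: hyp => [[[y yA vy] _]|[_ //]]; by move: (nA _ yA); rewrite vy.
    left; exact: (Xlemma su' p2 pB pA (inB _ x1AB vx1) (inB _ x2AB vx2) x12 vx1 vx2 zB vz nA).
  - exfalso; move: x1AB => /orP[xA|xB].
      by move/negP: hA; apply; apply/existsP; exists x1; rewrite xA.
    by move/negP: hB; apply; apply/existsP; exists x1; rewrite xB.
move=> t ht.
have [sg [zp [zm [zpS [zmS [vzp vzm]]]]]] : exists sg zp zm, [/\ zp \in side A B sg,
    zm \in side A B sg, E v zp & ~~ E v zm].
  case: hyp => [[[zp zpA vzp] [zm zmA vzm]]|[[zp zpB vzp] [zm zmB vzm]]].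
    by exists true, zp, zm.
  by exists false, zp, zm.
have [z2 [z2AB [vz2 z2p]]] : exists z2, [/\ (z2 \in A) || (z2 \in B), E v z2 & z2 != zp].
  case: (eqVneq x1 zp) => [e|ne]; last by exists x1.
  by exists x2; rewrite -e eq_sym.
have z2S : z2 \in side A B (z2 \in A).
  by move: z2AB; case: (boolP (z2 \in A)) => //= _.
have card := cardtS t.
have tb := tbound ht.
have SA : #|{: 'I_t * option ('I_3 * 'I_t)}| <= #|A| by rewrite card; apply: leq_trans pA.
have SB : #|{: 'I_t * option ('I_3 * 'I_t)}| <= #|B| by rewrite card; apply: leq_trans pB.
exact: (tSlemma su SA SB zpS zmS vzp vzm z2S vz2 z2p).
Qed.
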